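(* Let $1<w\le 2$, $1<h\le 2$, $n\ge 2$ and $\frac12\le y_1<\dots<y_n\le h-\frac12$. Every layout of these $n$ squares has gap at most $\frac{w+h-2}{n-1}$.
   Context: The instance is the strip $T=[0,w]\times[0,h]$ with the given $y_i$. A layout is a pair $(\mathbf x,\prec)$ where $\mathbf x=(x_1,\dots,x_n)$ with $x_i\in[\frac12,w-\frac12]$, and $\prec$ is a total order (stacking order) on the squares $s_1,\dots,s_n$, where $s_i$ is the closed axis-parallel unit square with centre $(x_i,y_i)$. If $s_i\prec s_j$ we say $s_j$ is in front of $s_i$ and $s_i$ is behind $s_j$. A point $p$ on the boundary of $s_i$ is visible if every square $s_j$ ($j\neq i$) containing $p$ is behind $s_i$. The visible perimeter of $s_i$ is the total length of its visible boundary points; the gap of $s_i$ is its visible perimeter minus $2$, and the gap of a layout is the minimum of the gaps of its squares. *)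

(* Defs.v *)
From HB Require Import structures.
From mathcomp Require Import all_boot all_order all_algebra.
From mathcomp Require Import all_classical all_reals.
From mathcomp Require Import ereal lebesgue_stieltjes_measure lebesgue_measure.
Set Implicit Arguments. Unset Strict Implicit. Unset Printing Implicit Defensive.
Import Order.TTheory GRing.Theory Num.Theory.
Local Open Scope classical_set_scope.
Local Open Scope ring_scope.

Section Squares.
Variable R : realType.

Definition in_square (cx cy : R) (p : R * R) : Prop :=
  `|p.1 - cx| <= 1/2 /\ `|p.2 - cy| <= 1/2.

(* a layout: centres x, fixed heights y, and a stacking order prec
   (prec i j  means  s_i is behind s_j, i.e. s_j is in front of s_i) *)
Definition visible n (x y : 'I_n -> R) (prec : 'I_n -> 'I_n -> Prop)
  (i : 'I_n) (p : R * R) : Prop :=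
  forall j : 'I_n, j <> i -> in_square (x j) (y j) p -> prec j i.

(* Visible perimeter: the boundary of s_i is the union of its four sides;
   the visible length is the sum over the four sides of the (Lebesgue)
   length of the set of visible points of that side (the four corners
   have length zero, so this is the total length of the visible
   boundary points). *)
Definition visible_side n (x y : 'I_n -> R) (prec : 'I_n -> 'I_n -> Prop)
  (i : 'I_n) (a b : R) (pt : R -> R * R) : set R :=
  [set t : R | a <= t <= b /\ visible x y prec i (pt t)].

Definition visible_perimeter n (x y : 'I_n -> R) (prec : 'I_n -> 'I_n -> Prop)
  (i : 'I_n) : \bar R :=
  let L := x i - 1/2 in let Rt := x i + 1/2 in
  let B := y i - 1/2 in let T := y i + 1/2 in
  (lebesgue_measure (visible_side x y prec i L Rt (fun t => (t, B)))
 + lebesgue_measure (visible_side x y prec i L Rt (fun t => (t, T)))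
 + lebesgue_measure (visible_side x y prec i B T (fun t => (L, t)))
 + lebesgue_measure (visible_side x y prec i B T (fun t => (Rt, t))))%E.

Definition square_gap n (x y : 'I_n -> R) (prec : 'I_n -> 'I_n -> Prop)
  (i : 'I_n) : \bar R :=
  (visible_perimeter x y prec i - 2%:E)%E.

Definition layout_gap n (x y : 'I_n -> R) (prec : 'I_n -> 'I_n -> Prop)
  : \bar R :=
  \big[Order.min/+oo%E]_(i < n) square_gap x y prec i.

Definition strict_total_order n (prec : 'I_n -> 'I_n -> Prop) : Prop :=
  (forall i, ~ prec i i) /\
  (forall i j k, prec i j -> prec j k -> prec i k) /\
  (forall i j, i <> j -> prec i j \/ prec j i).

End Squares.

(* Main.v *)
Require Import Defs.
From HB Require Import structures.
From mathcomp Require Import all_boot all_order all_algebra.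
From mathcomp Require Import all_classical all_reals.
From mathcomp Require Import ereal lebesgue_stieltjes_measure lebesgue_measure measure.
From mathcomp Require Import lra.
Import Order.TTheory GRing.Theory Num.Theory.
Local Open Scope classical_set_scope.
Local Open Scope ring_scope.
Set Implicit Arguments. Unset Strict Implicit.

Section Aux.
Variable R : realType.
Local Notation mu := (@lebesgue_measure R).
Definition mes (S : set R) : R := fine (mu S).

Lemma mu_itv (a b : R) : a <= b -> mu [set` `[a, b]] = (b - a)%:E.
Proof.
move=> ab; rewrite lebesgue_measure_itv /=.
case: ifP => [_|]; first by rewrite EFinB.
rewrite lte_fin => /negbT; rewrite -leNgt => ba.
have eab : b = a by apply/eqP; rewrite eq_le ab ba.
by rewrite eab subrr.
Qed.

Lemma mu_fin (a b : R) (S : set R) : a <= b -> measurable S ->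
  S `<=` [set` `[a, b]] -> mu S = (mes S)%:E.
Proof.
move=> ab mS Sab; rewrite /mes fineK // ge0_fin_numE ?measure_ge0 //.
apply: (le_lt_trans (y := mu [set` `[a, b]])).
  by apply: le_measure => //; rewrite inE //; exact: measurable_itv.
by rewrite mu_itv // ltry.
Qed.

Lemma mes_ge0 S : 0 <= mes S.
Proof. by rewrite /mes fine_ge0 // measure_ge0. Qed.

Lemma mes_itv (a b : R) : a <= b -> mes [set` `[a, b]] = b - a.
Proof. by move=> ab; rewrite /mes mu_itv. Qed.

Lemma mes_le (a b : R) (S T : set R) : a <= b -> measurable S -> measurable T ->
  S `<=` T -> T `<=` [set` `[a, b]] -> mes S <= mes T.
Proof.
move=> ab mS mT ST Tab.
rewrite -lee_fin -(mu_fin ab mT Tab) -(mu_fin ab mS (subset_trans ST Tab)).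
by apply: le_measure => //; rewrite inE.
Qed.

Lemma mes_pair (a b : R) (A B : set R) : a <= b -> measurable A -> measurable B ->
  A `<=` [set` `[a, b]] -> B `<=` [set` `[a, b]] ->
  mes A + mes B <= (b - a) + mes (A `&` B).
Proof.
move=> ab mA mB Aab Bab.
have mU : measurable (A `|` B) by exact: measurableU.
have mI : measurable (A `&` B) by exact: measurableI.
have Uab : A `|` B `<=` [set` `[a, b]] by move=> t [/Aab|/Bab].
have Iab : A `&` B `<=` [set` `[a, b]] by apply: (subset_trans _ Aab); apply: subIsetl.
have muA : (mu A < +oo)%E by rewrite (mu_fin ab mA Aab) ltry.
have : mu (A `|` B) = (mu A + mu B - mu (A `&` B))%E.
  exact: (@measureUfinl _ _ _ (@lebesgue_measure R) A B mA mB muA).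
rewrite (mu_fin ab mU Uab) (mu_fin ab mA Aab) (mu_fin ab mB Bab) (mu_fin ab mI Iab).
rewrite -EFinD => -[] eU.
have : mes (A `|` B) <= b - a.
  rewrite -(mes_itv ab); apply: (mes_le ab) => //; exact: measurable_itv.
lra.
Qed.

Lemma mes_disj n (E : 'I_n -> set R) (a b : R) : a <= b ->
  (forall i, measurable (E i)) -> (forall i, E i `<=` [set` `[a, b]]) ->
  (forall i j, i != j -> E i `&` E j = set0) ->
  \sum_(i < n) mes (E i) <= b - a.
Proof.
move=> ab mE Eab dE.
have tE : trivIset setT E.
  move=> i j _ _ [t Ht]; case: (eqVneq i j) => // /dE hij.
  by move: Ht; rewrite hij.
have mU : measurable (\big[setU/set0]_(i < n | predT i) E i).
  by apply: bigsetU_measurable.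
have Uab : \big[setU/set0]_(i < n | predT i) E i `<=` [set` `[a, b]].
  apply: (big_ind (fun S => S `<=` [set` `[a, b]])) => //.
  by move=> S1 S2 H1 H2 t [/H1|/H2].
have : mu (\big[setU/set0]_(i < n | predT i) E i) = (\sum_(i < n | predT i) mu (E i))%E.
  exact: (measure_bigsetU_ord (@lebesgue_measure R) predT mE tE).
rewrite (mu_fin ab mU Uab).
rewrite (eq_bigr (fun i => (mes (E i))%:E)); last by move=> i _; exact: (mu_fin ab (mE i) (Eab i)).
rewrite sumEFin => -[] <-.
rewrite -(mes_itv ab); apply: (mes_le ab) => //; exact: measurable_itv.
Qed.

Lemma meas_abs (c : R) (K : Prop) : measurable [set t : R | `|t - c| <= 1/2 /\ K].
Proof.
case: (pselect K) => k.
  have -> : [set t : R | `|t - c| <= 1/2 /\ K] = [set` `[c - 1/2, c + 1/2]].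
    apply/seteqP; split => t /=.
      by move=> [+ _]; rewrite in_itv /= ler_distl.
    by rewrite in_itv /= -ler_distl.
  exact: measurable_itv.
have -> : [set t : R | `|t - c| <= 1/2 /\ K] = set0.
  by apply/seteqP; split => t //= [_ /k].
exact: measurable0.
Qed.

Lemma meas_abs' (c : R) (K : Prop) : measurable [set t : R | K /\ `|t - c| <= 1/2].
Proof.
have -> : [set t : R | K /\ `|t - c| <= 1/2] = [set t : R | `|t - c| <= 1/2 /\ K].
  by apply/seteqP; split => t /= [? ?].
exact: meas_abs.
Qed.

Lemma meas_vis n (i : 'I_n) (prec : 'I_n -> 'I_n -> Prop) (a b : R)
  (Q : 'I_n -> R -> Prop) : (forall j, measurable [set t | Q j t]) ->
  measurable [set t | a <= t <= b /\ forall j, j <> i -> Q j t -> prec j i].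
Proof.
move=> mQ.
have -> : [set t | a <= t <= b /\ forall j, j <> i -> Q j t -> prec j i] =
  [set` `[a, b]] `&` \bigcap_(j in [set: 'I_n]) [set t | j <> i -> Q j t -> prec j i].
  apply/seteqP; split => t /=.
    move=> [ab H]; split; first by rewrite in_itv.
    by move=> j _; exact: H.
  move=> [ab H]; split; first by move: ab; rewrite in_itv.
  by move=> j; exact: (H j I).
apply: measurableI; first exact: measurable_itv.
apply: fin_bigcap_measurable; first exact: finite_finset.
move=> j _; case: (pselect (j <> i -> prec j i)) => hj.
  have -> : [set t | j <> i -> Q j t -> prec j i] = setT.
    by apply/seteqP; split=> t // _ ji _; exact: hj ji.
  exact: measurableT.
have -> : [set t | j <> i -> Q j t -> prec j i] = ~` [set t | Q j t].
  apply/seteqP; split => t /=.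
    by move=> H Hq; apply: hj => ji; exact: H ji Hq.
  by move=> Hnq ji Hq; case: Hnq.
exact: measurableC.
Qed.
End Aux.

Lemma frontmost n (prec : 'I_n -> 'I_n -> Prop) : strict_total_order prec ->
  forall i0 : 'I_n, exists f, forall j, j <> f -> prec j f.
Proof.
move=> [irr [tr tot]] i0.
pose cnt i := #|finset (fun j => `[< prec j i >])|.
have [f Hf] : exists f, forall j, (cnt j <= cnt f)%N.
  case: (@arg_maxP _ _ _ i0 xpredT cnt isT) => k _ H.
  by exists k => j; have := H j isT.
exists f => j jf; apply: contrapT => njf.
have fj : prec f j.
  have fj' : f <> j by move=> e; apply: jf.
  by case: (tot f j fj') => // H; case: njf.
have : (cnt f < cnt j)%N.
  apply: proper_card; apply/properP; split.
    apply/fintype.subsetP => k; rewrite !inE => hk.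
    exact: tr _ _ _ hk fj.
  by exists f; rewrite !inE //; apply/negP => /asboolP /irr.
by rewrite ltnNge Hf.
Qed.


Unset Implicit Arguments.
Set Strict Implicit.

Theorem lemma4 (R : realType) (w h : R) (n : nat) (y : 'I_n -> R)
  (hw : 1 < w <= 2) (hh : 1 < h <= 2) (hn : (2 <= n)%N)
  (hy_incr : forall i j : 'I_n, (i < j)%N -> y i < y j)
  (hy_range : forall i : 'I_n, 1/2 <= y i <= h - 1/2)
  (x : 'I_n -> R) (prec : 'I_n -> 'I_n -> Prop)
  (hx : forall i : 'I_n, 1/2 <= x i <= w - 1/2)
  (hprec : strict_total_order prec) :
  (layout_gap x y prec <= ((w + h - 2) / (n - 1)%:R)%:E)%E.
Proof.
move: hw hh => /andP[w1 w2] /andP[h1 h2].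
have hy1 i : 1/2 <= y i by case/andP: (hy_range i).
have hy2 i : y i <= h - 1/2 by case/andP: (hy_range i).
have hx1 i : 1/2 <= x i by case/andP: (hx i).
have hx2 i : x i <= w - 1/2 by case/andP: (hx i).
have [irr [tr tot]] := hprec.
have yneq i j : j <> i -> y j < y i \/ y i < y j.
  move=> ji; case: (ltngtP j i) => [lt|gt|eq].
  - by left; exact: hy_incr.
  - by right; exact: hy_incr.
  - by case: ji; apply: val_inj.
pose Vb i := visible_side x y prec i (x i - 1/2) (x i + 1/2) (fun t => (t, y i - 1/2)).
pose Vt i := visible_side x y prec i (x i - 1/2) (x i + 1/2) (fun t => (t, y i + 1/2)).
pose Vl i := visible_side x y prec i (y i - 1/2) (y i + 1/2) (fun t => (x i - 1/2, t)).
pose Vr i := visible_side x y prec i (y i - 1/2) (y i + 1/2) (fun t => (x i + 1/2, t)).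
have mVb i : measurable (Vb i).
  apply: (@meas_vis R n i prec (x i - 1/2) (x i + 1/2) (fun j t => `|t - x j| <= 1/2 /\ `|y i - 1/2 - y j| <= 1/2)) => j.
  exact: meas_abs.
have mVt i : measurable (Vt i).
  apply: (@meas_vis R n i prec (x i - 1/2) (x i + 1/2) (fun j t => `|t - x j| <= 1/2 /\ `|y i + 1/2 - y j| <= 1/2)) => j.
  exact: meas_abs.
have mVl i : measurable (Vl i).
  apply: (@meas_vis R n i prec (y i - 1/2) (y i + 1/2) (fun j t => `|x i - 1/2 - x j| <= 1/2 /\ `|t - y j| <= 1/2)) => j.
  exact: meas_abs'.
have mVr i : measurable (Vr i).
  apply: (@meas_vis R n i prec (y i - 1/2) (y i + 1/2) (fun j t => `|x i + 1/2 - x j| <= 1/2 /\ `|t - y j| <= 1/2)) => j.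
  exact: meas_abs'.
have abx i : x i - 1/2 <= x i + 1/2 by lra.
have aby i : y i - 1/2 <= y i + 1/2 by lra.
have sVb i : Vb i `<=` [set` `[x i - 1/2, x i + 1/2]] by move=> t [ab _]; rewrite /= in_itv.
have sVt i : Vt i `<=` [set` `[x i - 1/2, x i + 1/2]] by move=> t [ab _]; rewrite /= in_itv.
have sVl i : Vl i `<=` [set` `[y i - 1/2, y i + 1/2]] by move=> t [ab _]; rewrite /= in_itv.
have sVr i : Vr i `<=` [set` `[y i - 1/2, y i + 1/2]] by move=> t [ab _]; rewrite /= in_itv.
pose p i := (mes (Vb i) + mes (Vt i)) + (mes (Vl i) + mes (Vr i)).
have HP i : visible_perimeter x y prec i = (p i)%:E.
  rewrite /visible_perimeter /=.
  rewrite (mu_fin (abx i) (mVb i) (sVb i)) (mu_fin (abx i) (mVt i) (sVt i)).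
  rewrite (mu_fin (aby i) (mVl i) (sVl i)) (mu_fin (aby i) (mVr i) (sVr i)).
  by rewrite -!EFinD /p !addrA.
have Hfh i j t : j <> i -> Vb i t -> Vt i t -> `|t - x j| <= 1/2 -> prec j i.
  move=> ji [_ Hb] [_ Ht] hxj.
  have := hy1 i; have := hy2 i; have := hy1 j; have := hy2 j => ? ? ? ?.
  case: (yneq i j ji) => c.
    apply: (Hb j ji); split => //=.
    by rewrite ler_distl; apply/andP; split; lra.
  apply: (Ht j ji); split => //=.
  by rewrite ler_distl; apply/andP; split; lra.
have Hfv i j t : j <> i -> Vl i t -> Vr i t -> `|t - y j| <= 1/2 -> prec j i.
  move=> ji [_ Hl] [_ Hr] hyj.
  have := hx1 i; have := hx2 i; have := hx1 j; have := hx2 j => ? ? ? ?.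
  case: (lerP (x j) (x i)) => c.
    apply: (Hl j ji); split => //=.
    by rewrite ler_distl; apply/andP; split; lra.
  apply: (Hr j ji); split => //=.
  by rewrite ler_distl; apply/andP; split; lra.
have Hh : \sum_(i < n) (mes (Vb i) + mes (Vt i)) <= n%:R + w.
  apply: (le_trans (y := \sum_(i < n) (1 + mes (Vb i `&` Vt i)))).
    apply: ler_sum => i _.
    have := mes_pair (abx i) (mVb i) (mVt i) (sVb i) (sVt i); lra.
  rewrite big_split /= sumr_const card_ord lerD2l.
  have := @mes_disj R n (fun i => Vb i `&` Vt i) 0 w.
  rewrite subr0; apply => //.
  - lra.
  - by move=> i; apply: measurableI.
  - move=> i t [[/andP[t1 t2] _] _]; rewrite /= in_itv /=.
    have := hx1 i; have := hx2 i => ? ?; apply/andP; split; lra.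
  - move=> i j /eqP ij; apply/seteqP; split => // t [[Hbi Hti] [Hbj Htj]].
    have ji : j <> i by move=> e; apply: ij.
    have pji : prec j i.
      apply: (Hfh i j t ji Hbi Hti); rewrite ler_distl; exact: Hbj.1.
    have pij : prec i j.
      apply: (Hfh j i t ij Hbj Htj); rewrite ler_distl; exact: Hbi.1.
    by case: (irr i (tr _ _ _ pij pji)).
have Hv : \sum_(i < n) (mes (Vl i) + mes (Vr i)) <= n%:R + h.
  apply: (le_trans (y := \sum_(i < n) (1 + mes (Vl i `&` Vr i)))).
    apply: ler_sum => i _.
    have := mes_pair (aby i) (mVl i) (mVr i) (sVl i) (sVr i); lra.
  rewrite big_split /= sumr_const card_ord lerD2l.
  have := @mes_disj R n (fun i => Vl i `&` Vr i) 0 h.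
  rewrite subr0; apply => //.
  - lra.
  - by move=> i; apply: measurableI.
  - move=> i t [[/andP[t1 t2] _] _]; rewrite /= in_itv /=.
    have := hy1 i; have := hy2 i => ? ?; apply/andP; split; lra.
  - move=> i j /eqP ij; apply/seteqP; split => // t [[Hbi Hti] [Hbj Htj]].
    have ji : j <> i by move=> e; apply: ij.
    have pji : prec j i.
      apply: (Hfv i j t ji Hbi Hti); rewrite ler_distl; exact: Hbj.1.
    have pij : prec i j.
      apply: (Hfv j i t ij Hbj Htj); rewrite ler_distl; exact: Hbi.1.
    by case: (irr i (tr _ _ _ pij pji)).
have n0 : (0 < n)%N by apply: ltnW.
pose o0 : 'I_n := Ordinal n0.
pose o1 : 'I_n := Ordinal hn.
have [f Hf] := frontmost hprec o0.
have Vfull a b pt : visible_side x y prec f a b pt = [set` `[a, b]].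
  apply/seteqP; split => t /=; first by case=> ab _; rewrite in_itv.
  rewrite in_itv /= => ab; split => // j jf _; exact: Hf.
have pf : p f = 4.
  rewrite /p /Vb /Vt /Vl /Vr !Vfull !mes_itv //; lra.
have [g gf] : exists g : 'I_n, g != f.
  case: (eqVneq f o0) => [-> | H]; first by exists o1.
  by exists o0; rewrite eq_sym.
have N2 : (2 : R) <= n%:R by rewrite ler_nat.
set c := (w + h - 2) / (n - 1)%:R.
have cN : c * (n%:R - 1) = w + h - 2.
  rewrite /c natrB // divfK //; apply: lt0r_neq0; lra.
rewrite leNgt; apply/negP => Hlt.
have Hi i : c < p i - 2.
  have := lt_le_trans Hlt (bigmin_le +oo%E i (square_gap x y prec)).
  by rewrite /square_gap HP -EFinB lte_fin.
have Hsum : \sum_(i < n | i != f) (c + 2) < \sum_(i < n | i != f) p i.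
  apply: ltr_sum.
    by apply/hasP; exists g; [exact: mem_index_enum | exact: gf].
  move=> i _; have := Hi i; lra.
have e1 : \sum_(i < n) (c + 2) = (c + 2) + \sum_(i < n | i != f) (c + 2).
  by rewrite (bigD1 f).
have e2 : \sum_(i < n) p i = p f + \sum_(i < n | i != f) p i.
  by rewrite (bigD1 f).
have e3 : \sum_(i < n) (c + 2) = (c + 2) * n%:R.
  by rewrite sumr_const card_ord mulr_natr.
have e4 : \sum_(i < n) p i = \sum_(i < n) (mes (Vb i) + mes (Vt i)) + \sum_(i < n) (mes (Vl i) + mes (Vr i)).
  by rewrite -big_split.
nra.
Qed.
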